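(* Let $\mathbb{H}$ be a finite set and $\mathcal{H}=(H_e)_{e\in E(\mathbb{Z}^d)}$ a collection of subsets of $\mathbb{H}^2$. Let $S\subset\mathbb{Z}^d$ be finite and even, let $\{\mathbb{H}_u\}_{u\in\partial_\bullet S}$ be subsets of $\mathbb{H}$, and let $\mathcal{F}\subset\mathrm{Hom}_{S,\mathcal{H}}$ be such that $F(u)\in\mathbb{H}_u$ for every $F\in\mathcal{F}$ and $u\in\partial_\bullet S$. Let $F$ be a uniformly random element of $\mathcal{F}$, and for each odd $v\in S$ let $X_v$ be a random variable measurable with respect to $F|_{N(v)}$. Then \[ |\mathcal{F}|\le\prod_{v\in S\text{ odd}}\ \prod_x\left(\frac{Z^{\mathcal{H}}_v(\Psi_{v,x},I_{v,x})}{\mathbb{P}(X_v=x)}\right)^{\mathbb{P}(X_v=x)/2d}\cdot\prod_{u\in\partial_\bullet S}|\mathbb{H}_u|^{\frac1{2d}|\partial u\cap\partial S|}, \] where the inner product is over $x$ in the support of $X_v$, and $\Psi_{v,x}$, $I_{v,x}$ are the supports of $F|_{N(v)}$ and $F(v)$ on the event $\{X_v=x\}$.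
   Context: $\mathbb{Z}^d$ with nearest-neighbour edges $E(\mathbb{Z}^d)$; even/odd vertices by parity of coordinate sum; $N(v)$ the neighbours of $v$; $\partial_\bullet S$ the vertices of $S$ with a neighbour outside $S$; $S$ is even if $\partial_\bullet S$ consists only of even vertices; $\partial u$ the edges incident to $u$; $\partial S$ the edges with exactly one endpoint in $S$. $\mathrm{Hom}_{S,\mathcal{H}}$ is the set of $F:S\to\mathbb{H}$ with $(F(v),F(u))\in H_{\{v,u\}}$ whenever $v\in S$ is odd and $u\sim v$. For an edge $e$ and $h\in\mathbb{H}$, $H_{e,h}=\{h'\in\mathbb{H}:(h',h)\in H_e\}$; for odd $v$ and $\psi:N(v)\to\mathbb{H}$, $H_{v,\psi}=\bigcap_{u\sim v}H_{\{v,u\},\psi(u)}$; for a set $\Psi$ of such $\psi$ and $I\subset\mathbb{H}$, $Z^{\mathcal{H}}_v(\Psi,I)=\sum_{\psi\in\Psi}|H_{v,\psi}\cap I|^{2d}$. *)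

(* Defs.v *)
From HB Require Import structures.
From mathcomp Require Import all_boot all_order all_algebra.
From mathcomp Require Import finmap.
From mathcomp Require Import reals exp.
Set Implicit Arguments.
Unset Strict Implicit.
Unset Printing Implicit Defensive.
Import Order.TTheory GRing.Theory Num.Theory.
Local Open Scope fset_scope.

Definition pt (d : nat) := {ffun 'I_d -> int}.

Definition odd_pt d (v : pt d) : bool := odd (absz (\sum_(i < d) v i)%R).

Definition shift d (v : pt d) (i : 'I_d) (s : int) : pt d :=
  [ffun j => if j == i then (v j + s)%R else v j].

Definition nbrs d (v : pt d) : seq (pt d) :=
  [seq shift v i 1%R | i <- enum 'I_d] ++ [seq shift v i (-1)%R | i <- enum 'I_d].

Definition ibd d (S : {fset pt d}) (u : pt d) : bool :=
  (u \in S) && has (fun w => w \notin S) (nbrs u).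

Definition even_set d (S : {fset pt d}) : Prop :=
  forall u, ibd S u -> ~~ odd_pt u.

(* |∂u ∩ ∂S| : number of edges from u leaving S *)
Definition nout d (S : {fset pt d}) (u : pt d) : nat :=
  count (fun w => w \notin S) (nbrs u).

(* Hom_{S,H}: Hc v u is H_{v,u} (symmetric in the edge) *)
Definition is_hom d (H : finType) (S : {fset pt d})
  (Hc : pt d -> pt d -> {set H * H}) (F : {ffun S -> H}) : Prop :=
  forall v u : S, odd_pt (val v) -> val u \in nbrs (val v) ->
    (F v, F u) \in Hc (val v) (val u).

(* F|_{N(v)}, encoded as a partial function on S *)
Definition restrN d (H : finType) (S : {fset pt d}) (v : pt d)
  (F : {ffun S -> H}) : {ffun S -> option H} :=
  [ffun u => if val u \in nbrs v then Some (F u) else None].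

Definition Hvpsi d (H : finType) (S : {fset pt d})
  (Hc : pt d -> pt d -> {set H * H}) (v : pt d) (psi : {ffun S -> option H})
  : {set H} :=
  [set h | [forall u : S, if psi u is Some a then (h, a) \in Hc v (val u)
                          else true]].

Definition Zv (R : realType) d (H : finType) (S : {fset pt d})
  (Hc : pt d -> pt d -> {set H * H}) (v : pt d)
  (Psi : seq {ffun S -> option H}) (I : {set H}) : R :=
  (\sum_(psi <- Psi) (#|Hvpsi Hc v psi :&: I| ^ (2 * d))%:R)%R.

Definition event d (H : finType) (S : {fset pt d}) (T : eqType)
  (Fam : {set {ffun S -> H}}) (X : {ffun S -> H} -> T) (x : T)
  : {set {ffun S -> H}} := [set F in Fam | X F == x].

Definition prob (R : realType) d (H : finType) (S : {fset pt d}) (T : eqType)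
  (Fam : {set {ffun S -> H}}) (X : {ffun S -> H} -> T) (x : T) : R :=
  (#|event Fam X x|%:R / #|Fam|%:R)%R.

Definition supp d (H : finType) (S : {fset pt d}) (T : eqType)
  (Fam : {set {ffun S -> H}}) (X : {ffun S -> H} -> T) : seq T :=
  undup [seq X F | F <- enum Fam].

Definition Psi d (H : finType) (S : {fset pt d}) (T : eqType)
  (Fam : {set {ffun S -> H}}) (X : {ffun S -> H} -> T) (v : pt d) (x : T)
  : seq {ffun S -> option H} :=
  undup [seq restrN v F | F <- enum (event Fam X x)].

Definition Ivx d (H : finType) (S : {fset pt d}) (T : eqType)
  (Fam : {set {ffun S -> H}}) (X : {ffun S -> H} -> T) (v : S) (x : T)
  : {set H} := [set (F : {ffun S -> H}) v | F in event Fam X x].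

(* Main.v *)
Require Import Defs.
From HB Require Import structures.
From mathcomp Require Import all_boot all_order all_algebra.
From mathcomp Require Import finmap.
From mathcomp Require Import reals exp.
From mathcomp Require Import ring lra.
Import Order.TTheory GRing.Theory Num.Theory.
Local Open Scope ring_scope.
Definition cntf {O : finType} {B : eqType} (A : {set O}) (f : O -> B) (w : O) : nat :=
  #|[set w' in A | f w' == f w]|.

Lemma partition_seq {R : realType} {O : finType} {B : eqType} {A : {set O}}
  (f : O -> B) (K : O -> R) :
  \sum_(w in A) K w =
  \sum_(b <- undup [seq f w | w <- enum A]) \sum_(w in A | f w == b) K w.
Proof.
symmetry; rewrite -(exchange_big_dep xpredT) //=.
apply: eq_bigr => w wA.
rewrite -big_filter.
have -> : [seq b <- undup [seq f w0 | w0 <- enum A] | f w == b] = [:: f w].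
  rewrite -(filter_pred1_uniq (undup_uniq [seq f w0 | w0 <- enum A])
             (_ : f w \in _)).
    by apply: eq_filter => b /=; rewrite eq_sym.
  by rewrite mem_undup; apply: map_f; rewrite mem_enum.
by rewrite big_seq1.
Qed.

Lemma cntf_gt0 {O : finType} {B : eqType} {A : {set O}} (f : O -> B) w :
  w \in A -> (0 < cntf A f w)%N.
Proof. by move=> wA; apply/card_gt0P; exists w; rewrite inE wA eqxx. Qed.

Lemma fiber_sum {R : realType} {O : finType} {B : eqType} {A : {set O}}
  (f : O -> B) (G : B -> R) :
  \sum_(w in A) G (f w) / (cntf A f w)%:R =
  \sum_(b <- undup [seq f w | w <- enum A]) G b.
Proof.
rewrite (partition_seq f); rewrite big_seq_cond [RHS]big_seq_cond.
apply: eq_bigr => b /andP[bin _].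
have -> : \sum_(w in A | f w == b) G (f w) / (cntf A f w)%:R =
          \sum_(w in A | f w == b) G b / #|[set w' in A | f w' == b]|%:R.
  by apply: eq_bigr => w /andP[_ /eqP <-].
have -> : \sum_(w in A | f w == b) G b / #|[set w' in A | f w' == b]|%:R =
    \sum_(w in [set w' in A | f w' == b]) G b / #|[set w' in A | f w' == b]|%:R.
  by apply: eq_bigl => w; rewrite inE.
rewrite sumr_const -[_ *+ #|_|]mulr_natr divfK // pnatr_eq0 -lt0n.
move: bin; rewrite mem_undup => /mapP[w wA ->]; rewrite mem_enum in wA.
exact: (@cntf_gt0 _ _ A f w wA).
Qed.

Lemma fiber_count {R : realType} {O : finType} {B : eqType} {A : {set O}}
  (f : O -> B) :
  \sum_(w in A) 1 / (cntf A f w)%:R =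
  (size (undup [seq f w | w <- enum A]))%:R :> R.
Proof.
rewrite (fiber_sum f (fun _ => 1)).
by rewrite big_const_seq -Monoid.iteropE /= -[LHS]mulr_natl mulr1 count_predT.
Qed.

Lemma ln_le_sub1 (R : realType) (x : R) : 0 < x -> ln x <= x - 1.
Proof.
move=> x0; have := @le_ln1Dx R (x - 1).
have -> : 1 + (x - 1) = x by ring.
apply; lra.
Qed.

Lemma gibbs {R : realType} {O : finType} {A : {set O}} {Q : O -> R} :
  (forall w, w \in A -> 0 < Q w) ->
  \sum_(w in A) Q w <= #|A|%:R ->
  \sum_(w in A) ln (Q w) <= 0.
Proof.
move=> Qp HQ.
apply: (le_trans (y := \sum_(w in A) (Q w - 1))).
  by apply: ler_sum => w wA; apply: ln_le_sub1; apply: Qp.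
rewrite big_split /= sumrN subr_le0.
by move: HQ; rewrite -sum1_card natr_sum.
Qed.
Definition submod {R : realType} {I : finType} (g : {set I} -> R) :=
  forall X Y : {set I}, g (X :|: Y) + g (X :&: Y) <= g X + g Y.
Definition monog {R : realType} {I : finType} (g : {set I} -> R) :=
  forall X Y : {set I}, X \subset Y -> g X <= g Y.

Lemma shearer {R : realType} {I J : finType} (g : {set I} -> R) (k : nat)
  (w : J -> nat) (A : J -> {set I}) (E : {set I}) :
  g set0 = 0 -> monog g -> submod g ->
  (forall j, (0 < w j)%N -> A j \subset E) ->
  (forall e, e \in E -> (k <= \sum_(j | e \in A j) w j)%N) ->
  k%:R * g E <= \sum_j (w j)%:R * g (A j).
Proof.
move=> g0 mon sub.
have gge0 : forall X, 0 <= g X by move=> X; rewrite -g0; apply: mon; exact: sub0set.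
move: {2}#|E| (leqnn #|E|) => n; elim: n E A => [|n IH] E A.
  rewrite leqn0 cards_eq0 => /eqP -> _ _.
  rewrite g0 mulr0; apply: sumr_ge0 => j _; apply: mulr_ge0 => //.
move=> cardE AsubE cov.
have [E0 | [e eE]] := set_0Vmem E.
  rewrite E0 g0 mulr0; apply: sumr_ge0 => j _; apply: mulr_ge0 => //.
set E' := E :\ e.
have cE' : (#|E'| <= n)%N by move: cardE; rewrite (cardsD1 e E) eE.
have IH' := IH E' (fun j => A j :\ e) cE'.
have DE : 0 <= g E - g E' by rewrite subr_ge0; apply: mon; apply: subD1set.
have key : forall j, (w j)%:R * g (A j :\ e) + ((e \in A j) * w j)%:R * (g E - g E')
                     <= (w j)%:R * g (A j).
  move=> j; case: (posnP (w j)) => [-> | wpos]; first by rewrite muln0 !mul0r addr0.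
  case eA: (e \in A j); last first.
    rewrite mul0n mul0r addr0.
    have -> : A j :\ e = A j.
      by apply/setP => x; rewrite !inE; case: eqP => // ->; rewrite eA.
    by [].
  rewrite mul1n -mulrDr; apply: ler_wpM2l => //.
  have := sub (A j) E'.
  have -> : A j :|: E' = E.
    apply/setP => x; rewrite !inE; case: eqP => [-> | _]; first by rewrite eA eE.
    case xA: (x \in A j) => //=.
    by move/subsetP: (AsubE j wpos) => /(_ x xA) ->.
  have -> : A j :&: E' = A j :\ e.
    apply/setP => x; rewrite !inE; case: eqP => [_|_]; rewrite ?andbF //=.
    by rewrite andb_idr // => xA; move/subsetP: (AsubE j wpos); apply.
  lra.
apply: (le_trans _ (ler_sum _ (fun j _ => key j))).
rewrite big_split /=.
have -> : \sum_j ((e \in A j) * w j)%:R * (g E - g E') =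
          (\sum_(j | e \in A j) w j)%:R * (g E - g E').
  rewrite -mulr_suml natr_sum; congr (_ * _).
  rewrite [RHS]big_mkcond /=.
  by apply: eq_bigr => j _; case: (e \in A j); rewrite ?mul1n ?mul0n.
have H1 : k%:R * g E' <= \sum_j (w j)%:R * g (A j :\ e).
  apply: IH'.
    move=> j wpos; apply/subsetP => x; rewrite !inE => /andP[xe xA].
    rewrite xe /=.
    by move/subsetP: (AsubE j wpos) => /(_ x xA).
  move=> x; rewrite !inE => /andP[xe xE].
  rewrite (eq_bigl (fun j => x \in A j)); first exact: cov.
  by move=> j; rewrite !inE xe.
have H2 : k%:R * (g E - g E') <= (\sum_(j | e \in A j) w j)%:R * (g E - g E').
  by apply: ler_wpM2r => //; rewrite ler_nat; apply: cov.
lra.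
Qed.

Lemma chain {R : realType} {I : finType} (g : {set I} -> R) (E B : {set I})
  (N : I -> {set I}) :
  submod g -> [disjoint E & B] -> (forall v, v \in B -> N v \subset E) ->
  g (E :|: B) <= g E + \sum_(v in B) (g (v |: N v) - g (N v)).
Proof.
move=> sub.
move: {2}#|B| (leqnn #|B|) => n; elim: n B => [|n IH] B.
  rewrite leqn0 cards_eq0 => /eqP -> _ _.
  by rewrite setU0 big_set0 addr0.
move=> cardB dis NE.
have [B0 | [v vB]] := set_0Vmem B.
  by rewrite B0 setU0 big_set0 addr0.
set B' := B :\ v.
have cB' : (#|B'| <= n)%N by move: cardB; rewrite (cardsD1 v B) vB.
have IH' := IH B' cB'.
have dis' : [disjoint E & B'].
  by apply: disjointWr dis; apply: subD1set.
have NE' : forall u, u \in B' -> N u \subset E.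
  by move=> u; rewrite !inE => /andP[_]; apply: NE.
have := IH' dis' NE'.
rewrite (big_setD1 v vB) /=.
have vE : v \notin E by move: dis; rewrite disjoint_sym => /disjointFr /(_ vB) ->.
have NvE := NE v vB.
have := sub (v |: N v) (E :|: B').
have -> : (v |: N v) :|: (E :|: B') = E :|: B.
  apply/setP => x; rewrite !inE; case: eqP => [-> | xv] /=; first by rewrite vB !orbT.
  case xN: (x \in N v) => /=.
    by move/subsetP: NvE => /(_ x xN) ->.
  by [].
have -> : (v |: N v) :&: (E :|: B') = N v.
  apply/setP => x; rewrite !inE; case: eqP => [-> | xv] /=.
    rewrite (negbTE vE) /=.
    case vN: (v \in N v) => //=.
    by move/subsetP: NvE => /(_ v vN); rewrite (negbTE vE).
  by rewrite andb_idr // => xN; rewrite (subsetP NvE x xN).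
rewrite /B'; lra.
Qed.
Definition rW {I H : finType} (W : {set I}) (F : {ffun I -> H}) : {ffun I -> option H} :=
  [ffun u => if u \in W then Some (F u) else None].

Lemma rW_eqP {I H : finType} (W : {set I}) (a b : {ffun I -> H}) :
  reflect (forall u, u \in W -> a u = b u) (rW W a == rW W b).
Proof.
apply: (iffP eqP) => [h u uW | h].
  by have := congr1 (fun f : {ffun I -> option H} => f u) h; rewrite !ffunE uW => -[].
by apply/ffunP => u; rewrite !ffunE; case: ifP => // uW; rewrite h.
Qed.

Lemma rW_sub {I H : finType} {X Y : {set I}} {a b : {ffun I -> H}} :
  X \subset Y -> rW Y a == rW Y b -> rW X a == rW X b.
Proof.
move=> XY /rW_eqP h; apply/rW_eqP => u uX; apply: h; exact: (subsetP XY).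
Qed.

Lemma rW_U {I H : finType} (X Y : {set I}) (a b : {ffun I -> H}) :
  (rW (X :|: Y) a == rW (X :|: Y) b) = (rW X a == rW X b) && (rW Y a == rW Y b).
Proof.
apply/idP/andP => [h | [/rW_eqP hX /rW_eqP hY]].
  by split; apply: rW_sub h; rewrite ?subsetUl ?subsetUr.
by apply/rW_eqP => u; rewrite inE => /orP[/hX | /hY].
Qed.

Definition cnt {I H : finType} (Fam : {set {ffun I -> H}}) (W : {set I}) F :=
  cntf Fam (rW W) F.

Definition gent {R : realType} {I H : finType} (Fam : {set {ffun I -> H}})
  (W : {set I}) : R :=
  \sum_(F in Fam) ln (#|Fam|%:R / (cnt Fam W F)%:R).

Lemma cntf_sum {R : realType} {O : finType} {B : eqType} (A : {set O}) (f : O -> B) w :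
  (cntf A f w)%:R = \sum_(w' in A) ((f w' == f w) : nat)%:R :> R.
Proof.
rewrite /cntf -sum1_card natr_sum.
rewrite (eq_bigl (fun w' => (w' \in A) && (f w' == f w))); last by move=> w'; rewrite inE.
rewrite big_mkcondr /=; apply: eq_bigr => w' _; by case: (f w' == f w).
Qed.

Lemma cntf_eq {O : finType} {B : eqType} (A : {set O}) (f : O -> B) w w' :
  f w = f w' -> cntf A f w = cntf A f w'.
Proof. by rewrite /cntf => ->. Qed.

Lemma cntf_le {O : finType} {B : eqType} (A : {set O}) (f : O -> B) w :
  (cntf A f w <= #|A|)%N.
Proof. by apply: subset_leq_card; apply/subsetP => x; rewrite inE => /andP[]. Qed.

Lemma Fam_pos {R : realType} {O : finType} {A : {set O}} {w : O} : w \in A -> 0 < #|A|%:R :> R.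
Proof. by move=> wA; rewrite ltr0n; apply/card_gt0P; exists w. Qed.

Lemma cnt_pos {R : realType} {O : finType} {B : eqType} {A : {set O}} (f : O -> B) {w : O} :
  w \in A -> 0 < (cntf A f w)%:R :> R.
Proof. by move=> wA; rewrite ltr0n; apply: cntf_gt0. Qed.

Lemma ln_ratio {R : realType} (N a : R) : 0 < N -> 0 < a -> ln (N / a) = ln N - ln a.
Proof. by move=> N0 a0; rewrite ln_div. Qed.

Lemma gent_set0 {R : realType} {I H : finType} (Fam : {set {ffun I -> H}}) :
  gent Fam set0 = 0 :> R.
Proof.
rewrite /gent big1 // => F FF.
have -> : cnt Fam set0 F = #|Fam|.
  rewrite /cnt /cntf (_ : [set w' in Fam | rW set0 w' == rW set0 F] = Fam) //.
  apply/setP => F'; rewrite inE andb_idr // => _.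
  by apply/rW_eqP => u; rewrite inE.
by rewrite divff ?ln1 // gt_eqF // (Fam_pos FF).
Qed.

Lemma gent_setT {R : realType} {I H : finType} (Fam : {set {ffun I -> H}}) :
  gent Fam setT = #|Fam|%:R * ln (#|Fam|%:R) :> R.
Proof.
rewrite /gent (eq_bigr (fun _ => ln (#|Fam|%:R))).
  by rewrite sumr_const mulr_natl.
move=> F FF.
have -> : cnt Fam setT F = 1%N.
  rewrite /cnt /cntf -(cards1 F).
  rewrite (_ : [set w' in Fam | rW setT w' == rW setT F] = [set F]) //.
  apply/setP => F'; rewrite !inE.
  apply/idP/idP => [/andP[_ /rW_eqP h] | /eqP ->]; last by rewrite FF eqxx.
  by apply/eqP/ffunP => u; apply: h; rewrite inE.
by rewrite divr1.
Qed.

Lemma gent_mono {R : realType} {I H : finType} (Fam : {set {ffun I -> H}}) :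
  monog (gent Fam : {set I} -> R).
Proof.
move=> X Y XY; apply: ler_sum => F FF.
have N0 := Fam_pos (R:=R) FF.
rewrite !ln_ratio ?(cnt_pos _ FF) // lerD2l lerN2 ler_ln ?posrE ?(cnt_pos _ FF) //.
rewrite ler_nat /cnt /cntf; apply: subset_leq_card; apply/subsetP => F'.
by rewrite !inE => /andP[-> /=]; apply: rW_sub.
Qed.
Lemma aux_frac {R : realType} (n : nat) (c : R) :
  (n%:R : R) != 0 -> c != 0 -> 1 / (n%:R * c) *+ n <= (nat_of_bool true)%:R / c.
Proof.
move=> n0 c0; rewrite -mulr_natr /= le_eqVlt; apply/orP; left; apply/eqP.
by field; rewrite n0 c0.
Qed.

Lemma submod_point {R : realType} {I H : finType} (Fam : {set {ffun I -> H}})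
  (X Y : {set I}) (F1 F2 : {ffun I -> H}) :
  F1 \in Fam -> F2 \in Fam ->
  \sum_(F in Fam) ((rW X F1 == rW X F) : nat)%:R * ((rW Y F2 == rW Y F) : nat)%:R
      / ((cnt Fam (X :|: Y) F)%:R * (cnt Fam (X :&: Y) F)%:R)
  <= ((rW (X :&: Y) F2 == rW (X :&: Y) F1) : nat)%:R / (cnt Fam (X :&: Y) F1)%:R :> R.
Proof.
move=> F1F F2F.
set T := [set F in Fam | (rW X F1 == rW X F) && (rW Y F2 == rW Y F)].
have -> : \sum_(F in Fam) ((rW X F1 == rW X F) : nat)%:R * ((rW Y F2 == rW Y F) : nat)%:R
      / ((cnt Fam (X :|: Y) F)%:R * (cnt Fam (X :&: Y) F)%:R) =
    \sum_(F in T) 1 / ((cnt Fam (X :|: Y) F)%:R * (cnt Fam (X :&: Y) F)%:R) :> R.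
  rewrite big_mkcond [RHS]big_mkcond; apply: eq_bigr => F _; rewrite inE.
  case: (F \in Fam) => //=; case: (rW X F1 == rW X F); case: (rW Y F2 == rW Y F) => /=;
    by rewrite ?mul1r ?mul0r.
have [T0 | [F0 F0T]] := set_0Vmem T.
  rewrite T0 big_set0; apply: divr_ge0 => //.
have hT : forall F, F \in T ->
    (cnt Fam (X :|: Y) F = #|T|) /\ (cnt Fam (X :&: Y) F = cnt Fam (X :&: Y) F1).
  move=> F; rewrite inE => /andP[FF /andP[/eqP h1 /eqP h2]]; split.
    rewrite /cnt /cntf; congr (#|pred_of_set _|); apply/setP => F'; rewrite !inE rW_U h1 h2.
    by rewrite (eq_sym (rW X F)) (eq_sym (rW Y F)).
  apply: cntf_eq; apply/eqP; apply: (rW_sub (subsetIl X Y)); by rewrite h1.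
have Tpos : (0 < #|T|)%N by apply/card_gt0P; exists F0.
have c1pos : 0 < (cnt Fam (X :&: Y) F1)%:R :> R by apply: cnt_pos.
rewrite (eq_bigr (fun _ => 1 / (#|T|%:R * (cnt Fam (X :&: Y) F1)%:R))); last first.
  by move=> F FT; case: (hT F FT) => -> ->.
rewrite sumr_const.
have -> : (rW (X :&: Y) F2 == rW (X :&: Y) F1) = true.
  move: F0T; rewrite inE => /andP[_ /andP[h1 h2]].
  have e1 := rW_sub (subsetIl X Y) h1.
  have e2 := rW_sub (subsetIr X Y) h2.
  by rewrite (eqP e1) (eqP e2) eqxx.
have tn0 : (#|T|%:R : R) != 0 by rewrite pnatr_eq0 -lt0n.
have cn0 : ((cnt Fam (X :&: Y) F1)%:R : R) != 0 by rewrite gt_eqF.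
by apply: aux_frac.
Qed.
Lemma gent_submod {R : realType} {I H : finType} (Fam : {set {ffun I -> H}}) :
  submod (gent Fam : {set I} -> R).
Proof.
move=> X Y.
pose c W F : R := (cnt Fam W F)%:R.
pose Q F := c X F * c Y F / (c (X :|: Y) F * c (X :&: Y) F).
have cp : forall W F, F \in Fam -> 0 < c W F by move=> W F FF; apply: cnt_pos.
have Qp : forall F, F \in Fam -> 0 < Q F.
  move=> F FF; rewrite /Q; apply: divr_gt0; apply: mulr_gt0; exact: cp.
have E1 : forall F, F \in Fam ->
    ln (#|Fam|%:R / c (X :|: Y) F) + ln (#|Fam|%:R / c (X :&: Y) F) =
    ln (#|Fam|%:R / c X F) + ln (#|Fam|%:R / c Y F) + ln (Q F).
  move=> F FF; have N0 := Fam_pos (R:=R) FF.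
  have := cp X F FF; have := cp Y F FF; have := cp (X :|: Y) F FF; have := cp (X :&: Y) F FF.
  move=> p1 p2 p3 p4.
  rewrite /Q !ln_ratio // ?mulr_gt0 // !lnM ?posrE //; lra.
have bound : \sum_(F in Fam) Q F <= #|Fam|%:R.
  have step : forall F, F \in Fam -> Q F =
      \sum_(F1 in Fam) \sum_(F2 in Fam)
        ((rW X F1 == rW X F) : nat)%:R * ((rW Y F2 == rW Y F) : nat)%:R
        / ((cnt Fam (X :|: Y) F)%:R * (cnt Fam (X :&: Y) F)%:R).
    move=> F FF; rewrite /Q /c /cnt (cntf_sum Fam (rW X) F) (cntf_sum Fam (rW Y) F).
    rewrite mulr_suml mulr_suml; apply: eq_bigr => F1 _.
    rewrite mulr_sumr mulr_suml; apply: eq_bigr => F2 _ //.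
  rewrite (eq_bigr _ step) exchange_big /=.
  rewrite (eq_bigr (fun F1 => \sum_(F2 in Fam) \sum_(F in Fam)
        ((rW X F1 == rW X F) : nat)%:R * ((rW Y F2 == rW Y F) : nat)%:R
        / ((cnt Fam (X :|: Y) F)%:R * (cnt Fam (X :&: Y) F)%:R))); last first.
    by move=> F1 _; rewrite exchange_big.
  apply: (le_trans (y := \sum_(F1 in Fam) \sum_(F2 in Fam)
      ((rW (X :&: Y) F2 == rW (X :&: Y) F1) : nat)%:R / (cnt Fam (X :&: Y) F1)%:R)).
    apply: ler_sum => F1 F1F; apply: ler_sum => F2 F2F; exact: submod_point.
  rewrite -sum1_card natr_sum le_eqVlt; apply/orP; left; apply/eqP.
  apply: eq_bigr => F1 F1F.
  rewrite -mulr_suml -(cntf_sum Fam (rW (X :&: Y)) F1) mulfV // gt_eqF //.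
  exact: cnt_pos.
have G := gibbs Qp bound.
rewrite /Q /c in E1.
rewrite /gent -!big_split /= (eq_bigr _ E1) big_split /=.
rewrite /Q /c in G.
lra.
Qed.
Lemma rW_set1 {I H : finType} (v : I) (a b : {ffun I -> H}) :
  (rW [set v] a == rW [set v] b) = (a v == b v).
Proof.
apply/rW_eqP/eqP => [h | h u]; first by apply: h; rewrite inE.
by rewrite inE => /eqP ->.
Qed.

Definition Zx {R : realType} {I H : finType} {T : eqType} (Fam : {set {ffun I -> H}})
  (N : {set I}) (Xf : {ffun I -> H} -> T) (A : {ffun I -> option H} -> T -> {set H})
  (k : nat) (x : T) : R :=
  \sum_(psi <- undup [seq rW N F | F <- enum [set F in Fam | Xf F == x]])
     (#|A psi x| ^ k)%:R.

Lemma sum_ind {R : realType} {O : finType} (A : {set O}) (P : pred O) (K : O -> R) :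
  \sum_(w in A) (P w : nat)%:R * K w = \sum_(w in [set w in A | P w]) K w.
Proof.
rewrite big_mkcond [RHS]big_mkcond; apply: eq_bigr => w _; rewrite inE.
by case: (w \in A); case: (P w); rewrite /= ?mul1r ?mul0r.
Qed.

Lemma step1 {R : realType} {I H : finType} {T : eqType} (Fam : {set {ffun I -> H}})
  (v : I) (N : {set I}) (Xf : {ffun I -> H} -> T)
  (A : {ffun I -> option H} -> T -> {set H}) :
  (forall F1 F2, F1 \in Fam -> F2 \in Fam -> rW N F1 = rW N F2 -> Xf F1 = Xf F2) ->
  (forall F, F \in Fam -> F v \in A (rW N F) (Xf F)) ->
  gent Fam (v |: N) - gent Fam N <=
  \sum_(F in Fam) ln ((#|A (rW N F) (Xf F)|)%:R) :> R.
Proof.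
move=> hX hA.
pose m F : R := (#|A (rW N F) (Xf F)|)%:R.
have mpos : forall F, F \in Fam -> 0 < m F.
  by move=> F FF; rewrite /m ltr0n; apply/card_gt0P; exists (F v); apply: hA.
pose cN F : R := (cnt Fam N F)%:R.
pose cNv F : R := (cnt Fam (v |: N) F)%:R.
pose Q F := cN F / (cNv F * m F).
have Qp : forall F, F \in Fam -> 0 < Q F.
  move=> F FF; apply: divr_gt0; first exact: cnt_pos.
  by apply: mulr_gt0; [exact: cnt_pos | exact: mpos].
have E1 : forall F, F \in Fam ->
   ln (#|Fam|%:R / cNv F) - ln (#|Fam|%:R / cN F) = ln (m F) + ln (Q F).
  move=> F FF; have N0 := Fam_pos (R:=R) FF.
  have p1 : 0 < cN F by exact: cnt_pos.
  have p2 : 0 < cNv F by exact: cnt_pos.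
  have p3 := mpos F FF.
  rewrite /Q !ln_ratio ?mulr_gt0 // lnM ?posrE //; lra.
have bound : \sum_(F in Fam) Q F <= #|Fam|%:R.
  have step : forall F, F \in Fam -> Q F =
      \sum_(F1 in Fam) ((rW N F1 == rW N F) : nat)%:R / (cNv F * m F).
    by move=> F FF; rewrite /Q /cN /cnt (cntf_sum Fam (rW N) F) mulr_suml.
  rewrite (eq_bigr _ step) exchange_big /= -sum1_card natr_sum.
  apply: ler_sum => F1 F1F.
  set A1 := [set F in Fam | rW N F1 == rW N F].
  rewrite (eq_bigr (fun F => ((rW N F1 == rW N F) : nat)%:R * (1 / (cNv F * m F))));
    last by move=> F _; rewrite mul1r.
  rewrite sum_ind -/A1.
  rewrite (eq_bigr (fun F => (1 / m F1) * (1 / (cntf A1 (fun F' => F' v) F)%:R))); last first.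
    move=> F; rewrite inE => /andP[FF /eqP hF].
    have -> : m F = m F1 by rewrite /m (hX F F1) // hF.
    have -> : cNv F = (cntf A1 (fun F' => F' v) F)%:R.
      rewrite /cNv /cnt /cntf; congr (_%:R); apply: eq_card => F'; rewrite !inE.
      rewrite rW_U rW_set1 hF (eq_sym (rW N F')).
      by case: (F' \in Fam); case: (F' v == F v); case: (rW N F == rW N F').
    by rewrite !div1r invfM mulrC.
  rewrite -mulr_sumr fiber_count.
  rewrite div1r ler_pdivrMl ?mpos // mulr1 /m ler_nat cardE.
  apply: uniq_leq_size; first exact: undup_uniq.
  move=> h; rewrite mem_undup => /mapP[F]; rewrite mem_enum inE => /andP[FF /eqP hF] ->.
  rewrite mem_enum hF (hX F1 F) //; exact: hA.
have G := gibbs Qp bound.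
rewrite /Q /m /cN /cNv in E1 G.
rewrite /gent -sumrB (eq_bigr _ E1) big_split /=.
by rewrite gerDl.
Qed.
Lemma div_helper {R : realType} (a c z : R) : a / (c * z) = z^-1 * (a / c).
Proof. by rewrite invfM mulrA mulrC. Qed.

Lemma Zx_pos {R : realType} {I H : finType} {T : eqType} (Fam : {set {ffun I -> H}})
  (v : I) (N : {set I}) (Xf : {ffun I -> H} -> T)
  (A : {ffun I -> option H} -> T -> {set H}) (k : nat) :
  (forall F, F \in Fam -> F v \in A (rW N F) (Xf F)) ->
  forall F1, F1 \in Fam -> 0 < Zx Fam N Xf A k (Xf F1) :> R.
Proof.
move=> hA F1 F1F.
rewrite /Zx -(fiber_sum (rW N) (fun psi => (#|A psi (Xf F1)| ^ k)%:R)).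
have F1A : F1 \in [set F in Fam | Xf F == Xf F1] by rewrite inE F1F eqxx.
rewrite (bigD1 F1) //=.
apply: (lt_le_trans (y := (#|A (rW N F1) (Xf F1)| ^ k)%:R
                          / (cntf [set F in Fam | Xf F == Xf F1] (rW N) F1)%:R)).
  apply: divr_gt0; last exact: cnt_pos.
  rewrite ltr0n expn_gt0; apply/orP; left; apply/card_gt0P; exists (F1 v); exact: hA.
rewrite lerDl; apply: sumr_ge0 => F _; apply: divr_ge0 => //.
Qed.

Lemma step2 {R : realType} {I H : finType} {T : eqType} (Fam : {set {ffun I -> H}})
  (v : I) (N : {set I}) (Xf : {ffun I -> H} -> T)
  (A : {ffun I -> option H} -> T -> {set H}) (k : nat) :
  (forall F1 F2, F1 \in Fam -> F2 \in Fam -> rW N F1 = rW N F2 -> Xf F1 = Xf F2) ->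
  (forall F, F \in Fam -> F v \in A (rW N F) (Xf F)) ->
  \sum_(F in Fam) (k%:R * ln ((#|A (rW N F) (Xf F)|)%:R) +
                   ln (#|Fam|%:R / (cnt Fam N F)%:R)) <=
  \sum_(F in Fam) ln (Zx Fam N Xf A k (Xf F) * #|Fam|%:R / (cntf Fam Xf F)%:R) :> R.
Proof.
move=> hX hA.
pose m F : R := (#|A (rW N F) (Xf F)|)%:R.
have mpos : forall F, F \in Fam -> 0 < m F.
  by move=> F FF; rewrite /m ltr0n; apply/card_gt0P; exists (F v); apply: hA.
pose cN F : R := (cnt Fam N F)%:R.
pose cX F : R := (cntf Fam Xf F)%:R.
pose Z F : R := Zx Fam N Xf A k (Xf F).
have Zp : forall F, F \in Fam -> 0 < Z F by move=> F FF; exact: (Zx_pos Fam v N Xf A k hA F FF).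
pose Q F := m F ^+ k * cX F / (cN F * Z F).
have Qp : forall F, F \in Fam -> 0 < Q F.
  move=> F FF; apply: divr_gt0; first apply: mulr_gt0.
  - by apply: exprn_gt0; apply: mpos.
  - exact: cnt_pos.
  by apply: mulr_gt0; [exact: cnt_pos | exact: Zp].
have E1 : forall F, F \in Fam ->
   k%:R * ln (m F) + ln (#|Fam|%:R / cN F) =
   ln (Z F * #|Fam|%:R / cX F) + ln (Q F).
  move=> F FF; have N0 := Fam_pos (R:=R) FF.
  have p1 : 0 < cN F by exact: cnt_pos.
  have p2 : 0 < cX F by exact: cnt_pos.
  have p3 := mpos F FF.
  have p4 := Zp F FF.
  have p5 : 0 < m F ^+ k by apply: exprn_gt0.
  rewrite /Q !ln_ratio ?mulr_gt0 // !lnM ?posrE // lnXn //.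
  rewrite -mulr_natl; lra.
have bound : \sum_(F in Fam) Q F <= #|Fam|%:R.
  have step : forall F, F \in Fam -> Q F =
      \sum_(F1 in Fam) ((Xf F1 == Xf F) : nat)%:R * (m F ^+ k / (cN F * Z F)).
    by move=> F FF; rewrite /Q /cX (cntf_sum Fam Xf F) mulrAC mulrC mulr_suml.
  rewrite (eq_bigr _ step) exchange_big /= -sum1_card natr_sum.
  apply: ler_sum => F1 F1F.
  set x := Xf F1.
  set A1 := [set F in Fam | Xf F == x].
  rewrite (eq_bigr (fun F => ((Xf F == x) : nat)%:R * (m F ^+ k / (cN F * Z F))));
    last by move=> F _; rewrite eq_sym.
  rewrite sum_ind -/A1.
  rewrite (eq_bigr (fun F => (Z F1)^-1 * ((#|A (rW N F) x| ^ k)%:R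
                                / (cntf A1 (rW N) F)%:R))); last first.
    move=> F; rewrite inE => /andP[FF /eqP hF].
    have -> : Z F = Z F1 by rewrite /Z hF.
    have -> : cN F = (cntf A1 (rW N) F)%:R.
      rewrite /cN /cnt /cntf; congr (_%:R); apply: eq_card => F'; rewrite !inE.
      case F'F: (F' \in Fam) => //=.
      case e: (rW N F' == rW N F); rewrite ?andbF //=.
      by rewrite (hX F' F) // ?(eqP e) // hF eqxx.
    by rewrite /m hF natrX div_helper.
  rewrite -mulr_sumr (fiber_sum (rW N) (fun psi => (#|A psi x| ^ k)%:R)).
  by rewrite mulVf // gt_eqF // (Zp F1 F1F).
have G := gibbs Qp bound.
rewrite /Q /m /cN /cX /Z in E1 G.
rewrite (eq_bigr _ E1) big_split /=.
by rewrite gerDl.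
Qed.
Lemma perv {R : realType} {I H : finType} {T : eqType} (Fam : {set {ffun I -> H}})
  (v : I) (N : {set I}) (Xf : {ffun I -> H} -> T)
  (A : {ffun I -> option H} -> T -> {set H}) (k : nat) :
  (forall F1 F2, F1 \in Fam -> F2 \in Fam -> rW N F1 = rW N F2 -> Xf F1 = Xf F2) ->
  (forall F, F \in Fam -> F v \in A (rW N F) (Xf F)) ->
  k%:R * (gent Fam (v |: N) - gent Fam N) + gent Fam N <=
  \sum_(F in Fam) ln (Zx Fam N Xf A k (Xf F) * #|Fam|%:R / (cntf Fam Xf F)%:R) :> R.
Proof.
move=> hX hA.
have s1 := step1 (R:=R) Fam v N Xf A hX hA.
have s2 := step2 (R:=R) Fam v N Xf A k hX hA.
rewrite big_split /= -mulr_sumr in s2.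
have s1' : k%:R * (gent Fam (v |: N) - gent Fam N) <=
           k%:R * \sum_(F in Fam) ln ((#|A (rW N F) (Xf F)|)%:R) :> R.
  by apply: ler_wpM2l.
apply: (le_trans (lerD s1' (lexx _))).
by rewrite /gent.
Qed.
Lemma div_helper2 {R : realType} (a c z : R) : a / (c * z) = a / z * (1 / c).
Proof. by rewrite mul1r invfM mulrA mulrAC. Qed.

Lemma bnd {R : realType} {I H : finType} (Fam : {set {ffun I -> H}}) (u : I) (K : {set H}) :
  (forall F, F \in Fam -> F u \in K) ->
  gent Fam [set u] <= #|Fam|%:R * ln (#|K|%:R) :> R.
Proof.
move=> hK.
have Kp : forall F, F \in Fam -> 0 < #|K|%:R :> R.
  by move=> F FF; rewrite ltr0n; apply/card_gt0P; exists (F u); apply: hK.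
have ce : forall F, cnt Fam [set u] F = cntf Fam (fun F' => F' u) F.
  move=> F; rewrite /cnt /cntf; apply: eq_card => F'; rewrite !inE rW_set1 //.
pose Q F : R := #|Fam|%:R / ((cntf Fam (fun F' => F' u) F)%:R * #|K|%:R).
have Qp : forall F, F \in Fam -> 0 < Q F.
  move=> F FF; apply: divr_gt0; first exact: Fam_pos FF.
  by apply: mulr_gt0; [exact: cnt_pos | exact: (Kp F FF)].
have E1 : forall F, F \in Fam ->
    ln (#|Fam|%:R / (cnt Fam [set u] F)%:R) = ln (Q F) + ln (#|K|%:R) :> R.
  move=> F FF; rewrite ce; have N0 := Fam_pos (R:=R) FF.
  have p1 : 0 < (cntf Fam (fun F' => F' u) F)%:R :> R by exact: cnt_pos.
  have p2 := Kp F FF.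
  rewrite /Q !ln_ratio ?mulr_gt0 // lnM ?posrE //; lra.
have bound : \sum_(F in Fam) Q F <= #|Fam|%:R.
  rewrite (eq_bigr (fun F => (#|Fam|%:R / #|K|%:R) * (1 / (cntf Fam (fun F' => F' u) F)%:R)));
    last by move=> F _; rewrite /Q div_helper2.
  rewrite -mulr_sumr fiber_count.
  have [F0 | [F0 F0F]] := set_0Vmem Fam.
    by rewrite F0 cards0 !mul0r.
  rewrite mulrAC ler_pdivrMr ?(Kp F0 F0F) // ler_wpM2l // ler_nat cardE.
  apply: uniq_leq_size; first exact: undup_uniq.
  move=> h; rewrite mem_undup => /mapP[F]; rewrite mem_enum => FF ->.
  by rewrite mem_enum; apply: hK.
have G := gibbs Qp bound.
rewrite /gent (eq_bigr _ E1) big_split /= sumr_const -mulr_natl.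
rewrite /Q in G; lra.
Qed.
From mathcomp Require Import zify.
Lemma odd_abs_succ (z : int) : odd (absz (z + 1)%R) = ~~ odd (absz z).
Proof.
have h1 := modn2 (absz (z + 1)%R); have h2 := modn2 (absz z).
case: (odd (absz z)) h2; case: (odd (absz (z + 1)%R)) h1 => //= h1 h2; lia.
Qed.
Lemma odd_abs_pred (z : int) : odd (absz (z - 1)%R) = ~~ odd (absz z).
Proof.
have h1 := modn2 (absz (z - 1)%R); have h2 := modn2 (absz z).
case: (odd (absz z)) h2; case: (odd (absz (z - 1)%R)) h1 => //= h1 h2; lia.
Qed.
Lemma sum_shift d (v : pt d) i (s : int) :
  (\sum_(j < d) (shift v i s) j = \sum_(j < d) v j + s)%R.
Proof.
rewrite (bigD1 i) //= [in RHS](bigD1 i) //= ffunE eqxx.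
rewrite (eq_bigr (fun j => v j)); last by move=> j /negbTE ji; rewrite ffunE ji.
by rewrite -!addrA (addrC s).
Qed.

Lemma odd_shift d (v : pt d) i (s : int) : (s = 1 \/ s = -1)%R ->
  odd_pt (shift v i s) = ~~ odd_pt v.
Proof.
by rewrite /odd_pt sum_shift => -[] ->; [exact: odd_abs_succ | exact: odd_abs_pred].
Qed.

Lemma nbrs_odd d (u v : pt d) : u \in nbrs v -> odd_pt u = ~~ odd_pt v.
Proof.
rewrite mem_cat => /orP[] /mapP[i _ ->]; apply: odd_shift; [left | right] => //.
Qed.

Lemma shiftK d (v : pt d) i (s : int) : shift (shift v i s) i (- s)%R = v.
Proof.
by apply/ffunP => j; rewrite !ffunE; case: eqP => // _; rewrite addrK.
Qed.

Lemma nbrs_sym d (u v : pt d) : u \in nbrs v -> v \in nbrs u.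
Proof.
rewrite mem_cat => /orP[] /mapP[i _ ->]; rewrite mem_cat; apply/orP.
  by right; apply/mapP; exists i; rewrite ?mem_enum // shiftK.
left; apply/mapP; exists i; rewrite ?mem_enum //.
by rewrite -{2}(opprK 1%R) shiftK.
Qed.

Lemma nbrs_uniq d (v : pt d) : uniq (nbrs v).
Proof.
have inj : forall s : int, s != 0%R -> injective (fun i => shift v i s).
  move=> s s0 i j /= /ffunP /(_ i); rewrite !ffunE eqxx.
  case: eqP => // _ /eqP; rewrite -subr_eq0 addrAC subrr add0r.
  by rewrite (negbTE s0).
rewrite cat_uniq !(map_inj_uniq (inj _ _)) ?enum_uniq //= andbT.
apply/hasPn => w /mapP[i _ ->]; apply/negP => /mapP[j _] /ffunP /(_ i).
rewrite !ffunE eqxx; case: eqP => [-> | _].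
  by move/addrI/eqP.
by move/eqP; rewrite -subr_eq0 addrAC subrr add0r.
Qed.

Lemma size_nbrs d (v : pt d) : size (nbrs v) = (2 * d)%N.
Proof. by rewrite size_cat !size_map -enumT size_enum_ord addnn mul2n. Qed.
Local Open Scope fset_scope.
Lemma card_in_fset (T : choiceType) (S : {fset T}) (s : seq T) :
  uniq s -> #|[set v : S | val v \in s]| = count (fun x => x \in S) s.
Proof.
move=> us; rewrite cardE -(size_map val) -size_filter.
apply: perm_size; apply: uniq_perm.
- by rewrite (map_inj_uniq val_inj) enum_uniq.
- exact: filter_uniq.
move=> x; rewrite mem_filter; apply/mapP/andP => [[v] | [xS xs]].
  by rewrite mem_enum inE => vs ->; split => //; exact: fsvalP.
by exists [` xS]; rewrite // mem_enum inE /=.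
Qed.
Local Close Scope fset_scope.

Lemma coverage d (S : {fset pt d}) (e : S) : ~~ odd_pt (val e) ->
  (\sum_(v : S | e \in [set u : S | val u \in nbrs (val v)]) (odd_pt (val v) : nat) +
   (if ibd S (val e) then nout S (val e) else 0))%N = (2 * d)%N.
Proof.
move=> ee.
have -> : (\sum_(v : S | e \in [set u : S | val u \in nbrs (val v)]) (odd_pt (val v) : nat))%N
        = #|[set v : S | val v \in nbrs (val e)]|.
  rewrite -sum1_card; apply: eq_big => v; rewrite !inE.
    by apply/idP/idP => /nbrs_sym.
  move=> h; rewrite (nbrs_odd _ _ _ (nbrs_sym _ _ _ h)) (negbTE ee) //.
rewrite card_in_fset ?nbrs_uniq //.
have -> : (if ibd S (val e) then nout S (val e) else 0) = nout S (val e).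
  rewrite /ibd /nout; case: ifP => // /negbT; rewrite negb_and.
  rewrite (fsvalP e) /= => /hasPn h.
  by apply/esym/eqP; rewrite -leqn0 leqNgt -has_count; apply/hasPn.
by rewrite /nout count_predC size_nbrs.
Qed.
Lemma final_helper {R : realType} (N c Z : R) : N != 0 ->
  c * ln (Z * N / c) = N * (c / N * ln (Z / (c / N))).
Proof.
move=> N0; rewrite invf_div mulrA mulrA; congr (_ * ln _).
  by rewrite mulrAC mulfV ?mul1r.
by rewrite mulrA.
Qed.

Lemma cancel_helper {R : realType} (c L : R) : c != 0 -> L = c * L / c.
Proof. by move=> c0; rewrite mulrAC divff ?mul1r. Qed.

Lemma restrN_rW d (H : finType) (S : {fset pt d}) (v : S) (F : {ffun S -> H}) :
  restrN (val v) F = rW [set u : S | val u \in nbrs (val v)] F.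
Proof. by apply/ffunP => u; rewrite !ffunE inE. Qed.

Lemma perv_app (R : realType) d (H : finType) (Hc : pt d -> pt d -> {set H * H})
  (S : {fset pt d}) (Fam : {set {ffun S -> H}}) (T : eqType)
  (Xv : {ffun S -> H} -> T) (v : S) :
  (0 < #|Fam|)%N ->
  odd_pt (val v) ->
  (forall F, F \in Fam -> is_hom Hc F) ->
  (forall F1 F2, F1 \in Fam -> F2 \in Fam ->
     restrN (val v) F1 = restrN (val v) F2 -> Xv F1 = Xv F2) ->
  (2 * d)%:R * (gent Fam (v |: [set u : S | val u \in nbrs (val v)])
                - gent Fam [set u : S | val u \in nbrs (val v)])
    + gent Fam [set u : S | val u \in nbrs (val v)] <=
  #|Fam|%:R * \sum_(x <- supp Fam Xv) prob R Fam Xv x *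
     ln (Zv R Hc (val v) (Psi Fam Xv (val v) x) (Ivx Fam Xv v x) / prob R Fam Xv x).
Proof.
move=> Fam0 ov hhom hX.
set Nb := [set u : S | val u \in nbrs (val v)].
pose A := fun (psi : {ffun S -> option H}) (x : T) =>
            Hvpsi Hc (val v) psi :&: Ivx Fam Xv v x.
have hX' : forall F1 F2, F1 \in Fam -> F2 \in Fam -> rW Nb F1 = rW Nb F2 -> Xv F1 = Xv F2.
  by move=> F1 F2 F1F F2F h; apply: hX => //; rewrite !restrN_rW.
have hA : forall F, F \in Fam -> F v \in A (rW Nb F) (Xv F).
  move=> F FF; rewrite inE; apply/andP; split.
    rewrite /Hvpsi inE; apply/forallP => u; rewrite ffunE inE.
    by case: ifP => // uN; apply: (hhom F FF v u ov uN).
  by apply/imsetP; exists F => //; rewrite /event inE FF eqxx.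
apply: (le_trans (perv (R:=R) Fam v Nb Xv A (2 * d) hX' hA)).
have ZE : forall x, Zx Fam Nb Xv A (2 * d) x =
                    Zv R Hc (val v) (Psi Fam Xv (val v) x) (Ivx Fam Xv v x).
  move=> x; rewrite /Zx /Zv /Psi /event.
  by rewrite (eq_map (restrN_rW _ H S v)).
have N0 : (#|Fam|%:R : R) != 0 by rewrite pnatr_eq0 -lt0n.
pose G x : R := (#|event Fam Xv x|)%:R *
                ln (Zx Fam Nb Xv A (2 * d) x * #|Fam|%:R / (#|event Fam Xv x|)%:R).
rewrite (eq_bigr (fun F => G (Xv F) / (cntf Fam Xv F)%:R)); last first.
  move=> F FF; rewrite /G.
  have -> : #|event Fam Xv (Xv F)| = cntf Fam Xv F by [].
  apply: cancel_helper.
  by apply: lt0r_neq0; exact: (cnt_pos Xv FF).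
rewrite fiber_sum mulr_sumr le_eqVlt; apply/orP; left; apply/eqP.
apply: eq_bigr => x _; rewrite /G ZE /prob.
exact: final_helper.
Qed.
Lemma Zv_pos (R : realType) d (H : finType) (Hc : pt d -> pt d -> {set H * H})
  (S : {fset pt d}) (Fam : {set {ffun S -> H}}) (T : eqType)
  (Xv : {ffun S -> H} -> T) (v : S) :
  odd_pt (val v) ->
  (forall F, F \in Fam -> is_hom Hc F) ->
  forall F, F \in Fam ->
  0 < Zv R Hc (val v) (Psi Fam Xv (val v) (Xv F)) (Ivx Fam Xv v (Xv F)).
Proof.
move=> ov hhom F1 F1F.
set Nb := [set u : S | val u \in nbrs (val v)].
pose A := fun (psi : {ffun S -> option H}) (x : T) =>
            Hvpsi Hc (val v) psi :&: Ivx Fam Xv v x.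
have hA : forall F, F \in Fam -> F v \in A (rW Nb F) (Xv F).
  move=> F FF; rewrite inE; apply/andP; split.
    rewrite /Hvpsi inE; apply/forallP => u; rewrite ffunE inE.
    by case: ifP => // uN; apply: (hhom F FF v u ov uN).
  by apply/imsetP; exists F => //; rewrite /event inE FF eqxx.
have ZE : forall x, Zx Fam Nb Xv A (2 * d) x =
                    Zv R Hc (val v) (Psi Fam Xv (val v) x) (Ivx Fam Xv v x).
  move=> x; rewrite /Zx /Zv /Psi /event.
  by rewrite (eq_map (restrN_rW _ H S v)).
rewrite -ZE; exact: (Zx_pos Fam v Nb Xv A (2 * d) hA F1 F1F).
Qed.

Lemma prob_pos (R : realType) d (H : finType) (S : {fset pt d})
  (Fam : {set {ffun S -> H}}) (T : eqType) (Xv : {ffun S -> H} -> T) x :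
  x \in supp Fam Xv -> 0 < prob R Fam Xv x.
Proof.
rewrite /supp mem_undup => /mapP[F]; rewrite mem_enum => FF ->.
rewrite /prob; apply: divr_gt0; last exact: (Fam_pos FF).
rewrite ltr0n; apply/card_gt0P; exists F; by rewrite /event inE FF eqxx.
Qed.

Lemma supp_Zv_pos (R : realType) d (H : finType) (Hc : pt d -> pt d -> {set H * H})
  (S : {fset pt d}) (Fam : {set {ffun S -> H}}) (T : eqType)
  (Xv : {ffun S -> H} -> T) (v : S) x :
  odd_pt (val v) ->
  (forall F, F \in Fam -> is_hom Hc F) ->
  x \in supp Fam Xv ->
  0 < Zv R Hc (val v) (Psi Fam Xv (val v) x) (Ivx Fam Xv v x).
Proof.
move=> ov hhom; rewrite /supp mem_undup => /mapP[F]; rewrite mem_enum => FF ->.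
exact: Zv_pos.
Qed.
Lemma main_ln (R : realType) (d : nat) (H : finType)
  (Hc : pt d -> pt d -> {set H * H})
  (S : {fset pt d}) (Hu : pt d -> {set H})
  (Fam : {set {ffun S -> H}})
  (T : S -> eqType) (X : forall v : S, {ffun S -> H} -> T v) :
  (0 < #|Fam|)%N -> (0 < d)%N ->
  even_set S ->
  (forall F, F \in Fam -> is_hom Hc F) ->
  (forall F, F \in Fam -> forall u : S, ibd S (val u) -> F u \in Hu (val u)) ->
  (forall v : S, odd_pt (val v) -> forall F1 F2, F1 \in Fam -> F2 \in Fam ->
     restrN (val v) F1 = restrN (val v) F2 -> X v F1 = X v F2) ->
  (2 * d)%:R * (#|Fam|%:R * ln (#|Fam|%:R)) <=
   \sum_(v : S | odd_pt (val v)) #|Fam|%:R * \sum_(x <- supp Fam (X v))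
       prob R Fam (X v) x *
         ln (Zv R Hc (val v) (Psi Fam (X v) (val v) x) (Ivx Fam (X v) v x)
             / prob R Fam (X v) x)
   + \sum_(u : S | ibd S (val u))
       (nout S (val u))%:R * (#|Fam|%:R * ln (#|Hu (val u)|%:R)) :> R.
Proof.
move=> Npos d0 heven hhom hHu hX.
set k := (2 * d)%N.
set g := gent (R:=R) Fam.
set Ev := [set u : S | ~~ odd_pt (val u)].
set Od := [set u : S | odd_pt (val u)].
set Nb := fun v : S => [set u : S | val u \in nbrs (val v)].
have NbE : forall v, v \in Od -> Nb v \subset Ev.
  move=> v; rewrite inE => ov; apply/subsetP => u; rewrite !inE => h.
  by rewrite (nbrs_odd _ _ _ h) ov.
have hch : g (Ev :|: Od) <= g Ev + \sum_(v in Od) (g (v |: Nb v) - g (Nb v)).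
  apply: chain; first exact: gent_submod.
    by rewrite disjoints_subset; apply/subsetP => x; rewrite !inE.
  exact: NbE.
have EO : Ev :|: Od = setT by apply/setP => x; rewrite !inE; case: (odd_pt _).
rewrite EO /g gent_setT -/g in hch.
pose w := fun j : (S + S)%type => match j with
            | inl v => (odd_pt (val v) : nat)
            | inr u => if ibd S (val u) then nout S (val u) else 0%N end.
pose A := fun j : (S + S)%type => match j with
            | inl v => Nb v
            | inr u => [set u] end.
have hsh : k%:R * g Ev <= \sum_j (w j)%:R * g (A j).
  apply: shearer.
  - exact: gent_set0.
  - exact: gent_mono.
  - exact: gent_submod.
  - case => [v | u] /=.
      by move=> ov; apply: NbE; rewrite inE; move: ov; case: (odd_pt _).
    case: ifP => [ib _ | _]; last by [].
    apply/subsetP => x; rewrite !inE => /eqP ->; exact: heven.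
  - move=> e; rewrite inE => ee.
    rewrite big_sumType /= [X in (_ + X)%N](big_pred1 e); last by move=> u; rewrite !inE; apply/eqP/eqP => ->.
    by rewrite coverage.
rewrite big_sumType /= in hsh.
have e1 : \sum_(v : S) (odd_pt (val v) : nat)%:R * g (Nb v) =
          \sum_(v : S | odd_pt (val v)) g (Nb v).
  by rewrite [RHS]big_mkcond; apply: eq_bigr => v _; case: (odd_pt _); rewrite ?mul1r ?mul0r.
have e2 : \sum_(v in Od) k%:R * (g (v |: Nb v) - g (Nb v)) =
          \sum_(v : S | odd_pt (val v)) k%:R * (g (v |: Nb v) - g (Nb v)).
  by apply: eq_bigl => v; rewrite inE.
have h1 : k%:R * (#|Fam|%:R * ln (#|Fam|%:R)) <=
          k%:R * g Ev + \sum_(v : S | odd_pt (val v)) k%:R * (g (v |: Nb v) - g (Nb v)).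
  by rewrite -e2 -mulr_sumr -mulrDr; apply: ler_wpM2l.
have h3 : \sum_(v : S | odd_pt (val v)) (k%:R * (g (v |: Nb v) - g (Nb v)) + g (Nb v)) <=
   \sum_(v : S | odd_pt (val v)) #|Fam|%:R * \sum_(x <- supp Fam (X v))
       prob R Fam (X v) x *
         ln (Zv R Hc (val v) (Psi Fam (X v) (val v) x) (Ivx Fam (X v) v x)
             / prob R Fam (X v) x).
  apply: ler_sum => v ov; apply: perv_app => //; exact: hX.
have h4 : \sum_(u : S) ((if ibd S (val u) then nout S (val u) else 0%N))%:R * g [set u] <=
   \sum_(u : S | ibd S (val u))
       (nout S (val u))%:R * (#|Fam|%:R * ln (#|Hu (val u)|%:R)).
  rewrite [X in _ <= X]big_mkcond; apply: ler_sum => u _.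
  case: ifP => ib; last by rewrite mul0r.
  apply: ler_wpM2l => //; apply: bnd => F FF; exact: hHu.
rewrite big_split /= in h3.
move: hsh h1 h3 h4; rewrite e1 /=.
set s1 := \sum_(v : S | odd_pt (val v)) g (Nb v).
set s2 := \sum_(v : S | odd_pt (val v)) k%:R * (g (v |: Nb v) - g (Nb v)).
set s3 := \sum_(u : S) _.
move=> *; lra.
Qed.
Local Notation expR := sequences.expR.
Lemma kcancel {R : realType} (k N p L : R) : k != 0 -> k * (N * (p / k * L)) = N * (p * L).
Proof. by move=> k0; field. Qed.
Lemma kcancel2 {R : realType} (k N p L : R) : k != 0 -> k * (N * (p / k * L)) = p * (N * L).
Proof. by move=> k0; field. Qed.

Theorem lemma7p4 (R : realType) (d : nat) (H : finType)
  (Hc : pt d -> pt d -> {set H * H})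
  (S : {fset pt d}) (Hu : pt d -> {set H})
  (Fam : {set {ffun S -> H}})
  (T : S -> eqType) (X : forall v : S, {ffun S -> H} -> T v) :
  (0 < d)%N ->
  (forall v u : pt d, u \in nbrs v -> Hc v u = Hc u v) ->
  even_set S ->
  (forall F, F \in Fam -> is_hom Hc F) ->
  (forall F, F \in Fam -> forall u : S, ibd S (val u) -> F u \in Hu (val u)) ->
  (forall v : S, odd_pt (val v) -> forall F1 F2, F1 \in Fam -> F2 \in Fam ->
     restrN (val v) F1 = restrN (val v) F2 -> X v F1 = X v F2) ->
  (#|Fam|%:R : R) <=
    (\prod_(v : S | odd_pt (val v))
       \prod_(x <- supp Fam (X v))
         (Zv R Hc (val v) (Psi Fam (X v) (val v) x) (Ivx Fam (X v) v x)
            / prob R Fam (X v) x)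
         `^ (prob R Fam (X v) x / (2 * d)%:R))
    * \prod_(u : S | ibd S (val u))
        (#|Hu (val u)|%:R) `^ ((nout S (val u))%:R / (2 * d)%:R).
Proof.
move=> d0 hsym heven hhom hHu hX.
have [F0 | [F0 F0F]] := set_0Vmem Fam.
  rewrite F0 cards0; apply: mulr_ge0; apply: prodr_ge0 => v _.
    by apply: prodr_ge0 => x _; apply: powR_ge0.
  exact: powR_ge0.
have Npos : (0 < #|Fam|)%N by apply/card_gt0P; exists F0.
have NR : 0 < #|Fam|%:R :> R by rewrite ltr0n.
have kR : 0 < (2 * d)%:R :> R by rewrite ltr0n muln_gt0.
have M := main_ln R d H Hc S Hu Fam T X Npos d0 heven hhom hHu hX.
set S1 := \sum_(v : S | odd_pt (val v)) \sum_(x <- supp Fam (X v))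
    (prob R Fam (X v) x / (2 * d)%:R) *
    ln (Zv R Hc (val v) (Psi Fam (X v) (val v) x) (Ivx Fam (X v) v x) / prob R Fam (X v) x).
set S2 := \sum_(u : S | ibd S (val u))
    ((nout S (val u))%:R / (2 * d)%:R) * ln (#|Hu (val u)|%:R : R).
have lnle : ln (#|Fam|%:R : R) <= S1 + S2.
  have E : (2 * d)%:R * (#|Fam|%:R * (S1 + S2)) =
     \sum_(v : S | odd_pt (val v)) #|Fam|%:R * \sum_(x <- supp Fam (X v))
       prob R Fam (X v) x *
         ln (Zv R Hc (val v) (Psi Fam (X v) (val v) x) (Ivx Fam (X v) v x)
             / prob R Fam (X v) x)
     + \sum_(u : S | ibd S (val u))
       (nout S (val u))%:R * (#|Fam|%:R * ln (#|Hu (val u)|%:R)) :> R.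
    rewrite /S1 /S2 !mulrDr !mulr_sumr; congr (_ + _); apply: eq_bigr => v _.
      rewrite !mulr_sumr; apply: eq_bigr => x _.
      by rewrite kcancel // gt_eqF.
    by rewrite kcancel2 // gt_eqF.
  rewrite -E in M.
  by move: M; rewrite ler_pM2l // ler_pM2l.
apply: (le_trans (y := expR (S1 + S2))).
  by rewrite -{1}(lnK (x := #|Fam|%:R)) ?posrE // ler_expR.
rewrite expRD; apply: ler_pM.
- exact: expR_ge0.
- exact: expR_ge0.
- rewrite /S1 expR_sum le_eqVlt; apply/orP; left; apply/eqP.
  apply: eq_bigr => v ov; rewrite expR_sum big_seq [RHS]big_seq.
  apply: eq_bigr => x xs.
  have pp := prob_pos R d H S Fam (T v) (X v) x xs.
  have zp := supp_Zv_pos R d H Hc S Fam (T v) (X v) v x ov hhom xs.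
  by rewrite /powR gt_eqF // divr_gt0.
- rewrite /S2 expR_sum le_eqVlt; apply/orP; left; apply/eqP.
  apply: eq_bigr => u ib.
  have hp : 0 < #|Hu (val u)|%:R :> R.
    by rewrite ltr0n; apply/card_gt0P; exists (F0 u); apply: hHu.
  by rewrite /powR gt_eqF.
Qed.
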